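(* Let $d\ge 3$ be odd, $n=\frac{d^2+1}{2}$, and consider the generalized bicycle code defined by $a(x)=1+x$, $b(x)=1+x^d$ in $R_n$ (a $[[d^2+1,2,d]]$ code). Let $$u(x)=1+x^d+x^{2d}+\cdots+x^{(\frac{d-1}{2}-1)d},\qquad v(x)=x^{n-\frac{d+1}{2}}+x^{n-\frac{d+1}{2}+1}+\cdots+x^{n-1},$$ $P_d(x)=1+x+\cdots+x^{d-1}$, and $P_d(x)^{-1}$ its inverse modulo $x^n-1$. Then $w_1=(u(x),v(x))$ and $w_2=(xv(x^d),u(x^d))$ lie in $C_1\setminus C_2$ and $w_1+w_2\notin C_2$, so the two logical qubits may be labelled so that the X-type operator $X^{w_1}$ implements logical $XI$ and $X^{w_2}$ implements logical $XX$; with this labelling, logical $IX$ is implemented by $X^{(1,P_d(x))}$ and by $X^{(P_d(x)^{-1},1)}$. Each of these statements remains true when the vector is replaced by any cyclic shift $x^i\cdot(\,\cdot\,,\,\cdot\,)$. The operators for $XI$ and $XX$ have weight $d$ and those for $IX$ have weight $d+1$, and each is of minimum weight among X-type operators implementing the same logical operator.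
   Context: $R_n=\mathbb{F}_2[x]/\langle x^n-1\rangle$; vectors of $\mathbb{F}_2^{2n}$ are pairs $(p(x),q(x))$ of elements of $R_n$ (first component on the first $n$ qubits, second on the last $n$), $x^i\cdot(p,q)=(x^ip,x^iq)$, and weight is the number of nonzero coefficients. For the generalized bicycle code defined by $a,b$: X-stabilizer space $C_2=\{(ca,cb):c\in R_n\}$ and $C_1=\{(p,q):pb+qa=0\}$ (X-type operators commuting with all Z-stabilizers $x^i(b(x^{-1}),a(x^{-1}))$). $X^{w}$ denotes the tensor product of Pauli $X$ on the support of $w$. X-type operators $X^w$, $X^{w'}$ with $w,w'\in C_1$ implement the same logical operator iff $w+w'\in C_2$, and $X^w$ is a non-trivial logical operator iff $w\in C_1\setminus C_2$. *)

(* Defs.v *)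
(* R_n = F_2[x]/<x^n - 1> is modelled by polynomials over 'F_2,
   two polynomials denoting the same element of R_n iff they are congruent
   modulo x^n - 1 (i.e. have the same remainder). *)
From HB Require Import structures.
From mathcomp Require Import all_boot all_order all_algebra.
Set Implicit Arguments. Unset Strict Implicit. Unset Printing Implicit Defensive.
Import GRing.Theory.
Local Open Scope ring_scope.


Definition red (n : nat) (p : {poly 'F_2}) : {poly 'F_2} := p %% ('X^n - 1).

Definition vec := ({poly 'F_2} * {poly 'F_2})%type.

Definition vadd (w w' : vec) : vec := (w.1 + w'.1, w.2 + w'.2).

Definition vshift (i : nat) (w : vec) : vec := ('X^i * w.1, 'X^i * w.2).

Definition inC2 (n : nat) (a b : {poly 'F_2}) (w : vec) : Prop :=
  exists c : {poly 'F_2}, red n (c * a) = red n w.1 /\ red n (c * b) = red n w.2.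

Definition inC1 (n : nat) (a b : {poly 'F_2}) (w : vec) : Prop :=
  red n (w.1 * b + w.2 * a) = 0.

Definition wtR (n : nat) (p : {poly 'F_2}) : nat :=
  #|[set i : 'I_n | (red n p)`_i != 0]|.

Definition wt (n : nat) (w : vec) : nat := (wtR n w.1 + wtR n w.2)%N.

Definition same_logical (n : nat) (a b : {poly 'F_2}) (w w' : vec) : Prop :=
  inC1 n a b w /\ inC1 n a b w' /\ inC2 n a b (vadd w w').

Definition min_weight_logical (n : nat) (a b : {poly 'F_2}) (w : vec) : Prop :=
  forall w' : vec, same_logical n a b w w' -> (wt n w <= wt n w')%N.

Definition bic_n (d : nat) : nat := ((d * d + 1) %/ 2)%N.
Definition bic_a : {poly 'F_2} := 1 + 'X.
Definition bic_b (d : nat) : {poly 'F_2} := 1 + 'X^d.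
Definition bic_u (d : nat) : {poly 'F_2} :=
  \sum_(i < (d - 1) %/ 2) 'X^(i * d).
Definition bic_v (d : nat) : {poly 'F_2} :=
  \sum_(i < (d + 1) %/ 2) 'X^(bic_n d - (d + 1) %/ 2 + i).
Definition Pd (d : nat) : {poly 'F_2} := \sum_(i < d) 'X^i.
Definition bic_w1 (d : nat) : vec := (bic_u d, bic_v d).
Definition bic_w2 (d : nat) : vec :=
  ('X * (bic_v d \Po 'X^d), bic_u d \Po 'X^d).

(* Main.v *)
Require Import Defs.
From HB Require Import structures.
From mathcomp Require Import all_boot all_order all_algebra.
From mathcomp Require Import ring zify.
Import GRing.Theory.
Local Open Scope ring_scope.
Set Implicit Arguments. Unset Strict Implicit. Unset Printing Implicit Defensive.

Notation P2 := {poly 'F_2}.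

Lemma F2m1 : (-1 : 'F_2) = 1. Proof. by apply/eqP. Qed.
Lemma F2_01 (x : 'F_2) : x = 0 \/ x = 1.
Proof.
case: x => [[|[|k]] Hk]; [left|right|]; try by apply/val_inj.
by [].
Qed.
Lemma F2_ne0 (x : 'F_2) : x != 0 -> x = 1.
Proof. by case: (F2_01 x) => ->. Qed.
Lemma F2_11 : (1 + 1 : 'F_2) = 0. Proof. by apply/eqP. Qed.

Lemma oppF2 (p : P2) : - p = p.
Proof. by rewrite -mulN1r -polyCN F2m1 polyC1 mul1r. Qed.
Lemma addF2 (p : P2) : p + p = 0.
Proof. by rewrite -{1}[p]oppF2 addNr. Qed.
Lemma natF2 (k : nat) : (k%:R : 'F_2) = (odd k)%:R.
Proof.
elim: k => // k IH; rewrite mulrSr IH /=.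
by case: (odd k) => /=; rewrite ?add0r // F2_11.
Qed.

Lemma subF2 (p q : P2) : p - q = p + q.
Proof. by rewrite oppF2. Qed.

Definition Dn (n : nat) : P2 := 'X^n - 1.
Definition Jn (n : nat) : P2 := \sum_(i < n) 'X^i.

Lemma geomF2 (y : P2) k : (1 + y) * \sum_(i < k) y ^+ i = 1 + y ^+ k.
Proof. by rewrite addrC -subF2 -subrX1 subF2 addrC. Qed.

Lemma DnJ n : Dn n = (1 + 'X) * Jn n.
Proof. by rewrite /Dn /Jn geomF2 subF2 addrC. Qed.

Lemma red_eq n p q : red n p = red n q <-> Dn n %| p - q.
Proof.
rewrite /red -/(Dn n); split.
  by move=> H; apply/modp_eq0P; rewrite modpD modpN H subrr.
by move/modp_eq0P; rewrite modpD modpN => /eqP; rewrite subr_eq0 => /eqP.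
Qed.

Lemma red_eq0 n p : red n p = 0 <-> Dn n %| p.
Proof. by rewrite /red; split => [/modp_eq0P|/modp_eq0P]. Qed.

Lemma Dn1 n : (Dn n).[1] = 0.
Proof. by rewrite /Dn hornerD hornerN hornerXn expr1n hornerC subrr. Qed.

Lemma horner_cong n p q : Dn n %| p - q -> p.[1] = q.[1].
Proof.
move/dvdpP => [r Hr]; apply/eqP; rewrite -subr_eq0 -hornerN -hornerD Hr.
by rewrite hornerM Dn1 mulr0.
Qed.

Lemma red_horner n p : (red n p).[1] = p.[1].
Proof.
apply: (@horner_cong n); apply/(red_eq n).
by rewrite /red modp_id.
Qed.

Lemma X1E : (1 + 'X : P2) = 'X - 1%:P.
Proof. by rewrite polyC1 subF2 addrC. Qed.

Lemma X1_neq0 : (1 + 'X : P2) != 0.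
Proof. by rewrite X1E polyXsubC_eq0. Qed.

Lemma dvdX1 (p : P2) : p.[1] = 0 -> (1 + 'X) %| p.
Proof. by move=> H; rewrite X1E dvdp_XsubCl /root H. Qed.

Lemma Jn1 n : (Jn n).[1] = n%:R.
Proof.
rewrite /Jn horner_sum.
under eq_bigr do rewrite hornerXn expr1n.
by rewrite sumr_const card_ord.
Qed.

Lemma annJ n h : odd n -> Dn n %| (1 + 'X) * h -> Dn n %| h - h.[1]%:P * Jn n.
Proof.
move=> on; rewrite {1}DnJ dvdp_mul2l ?X1_neq0 // => /dvdpP [s ->].
rewrite hornerM Jn1 natF2 on mulr1 -mulrBl DnJ.
apply: dvdp_mul => //; apply: dvdX1.
by rewrite hornerD hornerN hornerC subrr.
Qed.

Lemma a1 : bic_a.[1] = 0.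
Proof. by rewrite /bic_a hornerD hornerC hornerX F2_11. Qed.
Lemma b1 d : (bic_b d).[1] = 0.
Proof. by rewrite /bic_b hornerD hornerC hornerXn expr1n F2_11. Qed.

Lemma inC2_par n d w : inC2 n bic_a (bic_b d) w -> w.1.[1] = 0 /\ w.2.[1] = 0.
Proof.
move=> [c [H1 H2]]; split.
  by rewrite -(red_horner n w.1) -H1 red_horner hornerM a1 mulr0.
by rewrite -(red_horner n w.2) -H2 red_horner hornerM b1 mulr0.
Qed.

Lemma triv n d w : odd n -> inC1 n bic_a (bic_b d) w ->
  w.1.[1] = 0 -> w.2.[1] = 0 -> inC2 n bic_a (bic_b d) w.
Proof.
case: w => p q /= on; rewrite /inC1 /= => /red_eq0 H p1 q1.
have /dvdpP [c Hc] : (1 + 'X) %| p by apply: dvdX1.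
exists c; split; first by rewrite Hc /bic_a.
apply/red_eq; rewrite subF2.
have := @annJ n (c * bic_b d + q) on.
rewrite hornerD hornerM b1 mulr0 add0r q1 polyC0 mul0r subr0; apply.
move: H; congr (_ %| _); rewrite Hc /bic_a.
ring.
Qed.

Definition msum (s : seq nat) : P2 := \sum_(e <- s) 'X^e.

Lemma msum_cat s t : msum (s ++ t) = msum s + msum t.
Proof. by rewrite /msum big_cat. Qed.

Lemma coef_msum s k : (msum s)`_k = (count_mem k s)%:R.
Proof.
elim: s => [|e s IH]; first by rewrite /msum big_nil coef0.
by rewrite /msum big_cons coefD -/(msum s) IH coefXn /= natrD eq_sym.
Qed.

Lemma horner_msum s : (msum s).[1] = (size s)%:R.
Proof.
elim: s => [|e s IH]; first by rewrite /msum big_nil horner0.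
by rewrite /msum big_cons hornerD -/(msum s) IH hornerXn expr1n /= -natr1 addrC.
Qed.

Lemma size_msum n s : all (fun e => e < n)%N s -> (size (msum s) <= n)%N.
Proof.
elim: s => [|e s IH] /=; first by rewrite /msum big_nil size_poly0.
case/andP => He Hs; rewrite /msum big_cons -/(msum s).
by apply: leq_trans (size_polyD _ _) _; rewrite geq_max size_polyXn He IH.
Qed.

Lemma size_Dn n : (0 < n)%N -> size (Dn n) = n.+1.
Proof. by move=> hn; rewrite /Dn -polyC1 size_XnsubC. Qed.

Lemma Dn_neq0 n : (0 < n)%N -> Dn n != 0.
Proof. by move=> hn; rewrite -size_poly_eq0 size_Dn. Qed.

Lemma red_small n (p : P2) : (0 < n)%N -> (size p <= n)%N -> red n p = p.
Proof. by move=> hn H; rewrite /red -/(Dn n) modp_small // size_Dn. Qed.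

Lemma Xe_cong n e : (0 < n)%N -> Dn n %| 'X^e - 'X^(e %% n).
Proof.
move=> hn; rewrite {1}(divn_eq e n) exprD mulnC exprM -{2}['X^(e %% n)]mul1r -mulrBl.
by apply: dvdp_mulr; rewrite /Dn (subrX1 ('X^n)) dvdp_mulIl.
Qed.

Lemma msum_cong n s : (0 < n)%N -> Dn n %| msum s - msum (map (modn^~ n) s).
Proof.
move=> hn; elim: s => [|e s IH]; first by rewrite /msum /= big_nil subrr dvdp0.
rewrite /= /msum !big_cons -/(msum s) -/(msum (map _ s)).
have -> : 'X^e + msum s - ('X^(e %% n) + msum [seq (x %% n)%N | x <- s]) =
  ('X^e - 'X^(e %% n)) + (msum s - msum [seq (x %% n)%N | x <- s]) by ring.
by apply: dvdp_add => //; apply: Xe_cong.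
Qed.

Lemma red_msum n s : (0 < n)%N -> red n (msum s) = msum (map (modn^~ n) s).
Proof.
move=> hn; rewrite -[RHS](@red_small n) //.
  by apply/red_eq; apply: msum_cong.
apply: size_msum; apply/allP => x /mapP [e _ ->]; exact: ltn_pmod.
Qed.

Lemma card_in n t : uniq t -> all (fun e => e < n)%N t ->
  #|[set i : 'I_n | val i \in t]| = size t.
Proof.
move=> ut at_; rewrite cardE -(size_map val).
apply: perm_size; apply: uniq_perm.
- by rewrite (map_inj_uniq val_inj) enum_uniq.
- done.
move=> e; apply/mapP/idP => [[i]|He].
  by rewrite mem_enum inE => Hi ->.
have Hn : (e < n)%N by move/allP: at_; apply.
by exists (Ordinal Hn) => //; rewrite mem_enum inE.
Qed.

Lemma F2nat_neq0 k : ((k%:R : 'F_2) != 0) = odd k.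
Proof. by rewrite natF2; case: (odd k); rewrite ?eqxx ?oner_eq0. Qed.

Lemma wtR_msum n s : (0 < n)%N -> uniq (map (modn^~ n) s) -> wtR n (msum s) = size s.
Proof.
move=> hn us; rewrite /wtR red_msum //.
rewrite -(size_map (modn^~ n)) -(card_in (n:=n) us); last first.
  by apply/allP => x /mapP [e _ ->]; exact: ltn_pmod.
apply: eq_card => i; rewrite !inE coef_msum count_uniq_mem // F2nat_neq0.
by case: (_ \in _).
Qed.

Lemma wtR_msum_le n s : (0 < n)%N -> (wtR n (msum s) <= size s)%N.
Proof.
move=> hn; rewrite /wtR red_msum //.
set t := map _ s.
apply: (@leq_trans (size (undup t))); last by rewrite -(size_map (modn^~ n) s) size_undup.
rewrite -(card_in (n:=n) (undup_uniq t)); last first.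
  by apply/allP => x; rewrite mem_undup => /mapP [e _ ->]; exact: ltn_pmod.
apply: subset_leq_card; apply/subsetP => i; rewrite !inE coef_msum F2nat_neq0.
rewrite mem_undup => Ho; rewrite -has_pred1 has_count; case: (count _ _) Ho => //.
Qed.

Definition supp n (p : P2) : seq nat :=
  [seq val i | i <- enum [set i : 'I_n | (red n p)`_i != 0]].

Lemma size_supp n p : size (supp n p) = wtR n p.
Proof. by rewrite /supp size_map -cardE. Qed.

Lemma F2_nat_ne0 (x : 'F_2) : x = (x != 0)%:R.
Proof. by case: (F2_01 x) => ->; rewrite ?eqxx ?oner_eq0. Qed.

Lemma red_supp n p : (0 < n)%N -> red n p = msum (supp n p).
Proof.
move=> hn; apply/polyP => k; rewrite coef_msum count_uniq_mem; last first.
  by rewrite /supp (map_inj_uniq val_inj) enum_uniq.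
case: (ltnP k n) => Hk.
  have -> : (k \in supp n p) = ((red n p)`_k != 0).
    apply/mapP/idP => [[i]|H].
      by rewrite mem_enum inE => Hi ->.
    by exists (Ordinal Hk) => //; rewrite mem_enum inE.
  exact: F2_nat_ne0.
have -> : (k \in supp n p) = false.
  apply/negbTE/negP => /mapP [i _ Hi]; move: (ltn_ord i); rewrite -Hi.
  by rewrite ltnNge Hk.
rewrite nth_default //; apply: leq_trans Hk.
by have := ltn_modpN0 p (Dn_neq0 hn); rewrite size_Dn.
Qed.

Lemma cong_supp n p : (0 < n)%N -> Dn n %| p - msum (supp n p).
Proof.
by move=> hn; apply/red_eq; rewrite -red_supp // /red modp_id.
Qed.

Lemma wtR_cong n p q : Dn n %| p - q -> wtR n p = wtR n q.
Proof. by move/red_eq => H; rewrite /wtR H. Qed.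

Lemma wtR_add n p q : (0 < n)%N -> (wtR n (p + q) <= wtR n p + wtR n q)%N.
Proof.
move=> hn; rewrite (@wtR_cong n (p + q) (msum (supp n p ++ supp n q))).
  by apply: leq_trans (wtR_msum_le _ hn) _; rewrite size_cat !size_supp.
rewrite msum_cat.
have -> : p + q - (msum (supp n p) + msum (supp n q)) =
  (p - msum (supp n p)) + (q - msum (supp n q)) by ring.
by apply: dvdp_add; apply: cong_supp.
Qed.

Lemma msum_mul s t : msum s * msum t = msum [seq (i + j)%N | i <- s, j <- t].
Proof.
rewrite /msum big_allpairs_dep mulr_suml; apply: eq_bigr => i _.
by rewrite mulr_sumr; apply: eq_bigr => j _; rewrite exprD.
Qed.

Lemma wtR_mul n p q : (0 < n)%N -> (wtR n (p * q) <= wtR n p * wtR n q)%N.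
Proof.
move=> hn; rewrite (@wtR_cong n (p * q) (msum (supp n p) * msum (supp n q))).
  rewrite msum_mul; apply: leq_trans (wtR_msum_le _ hn) _.
  by rewrite size_allpairs !size_supp.
have -> : p * q - (msum (supp n p) * msum (supp n q)) =
  (p - msum (supp n p)) * q + msum (supp n p) * (q - msum (supp n q)) by ring.
by apply: dvdp_add; [apply: dvdp_mulr | apply: dvdp_mull]; apply: cong_supp.
Qed.

Lemma wtR_par n p : (0 < n)%N -> (wtR n p)%:R = p.[1].
Proof.
by move=> hn; rewrite -size_supp -horner_msum -red_supp // red_horner.
Qed.

Lemma two0 : (1 + 1 : P2) = 0.
Proof. exact: addF2. Qed.

Lemma sum_ord_msum k (f : nat -> nat) :
  \sum_(i < k) 'X^(f i) = msum (map f (iota 0 k)) :> P2.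
Proof.
by rewrite /msum big_map -[in RHS](subn0 k) -/(index_iota 0 k) big_mkord.
Qed.

Lemma msum_comp d s : msum s \Po 'X^d = msum [seq (e * d)%N | e <- s].
Proof.
elim: s => [|e s IH]; first by rewrite /msum !big_nil comp_poly0.
rewrite /= /msum !big_cons comp_polyD -/(msum s) IH comp_Xn_poly.
by rewrite -exprM mulnC.
Qed.

Lemma msum_shift i s : 'X^i * msum s = msum [seq (i + e)%N | e <- s].
Proof.
rewrite /msum big_map mulr_sumr; apply: eq_bigr => e _; by rewrite exprD.
Qed.

Lemma uniq_shift n i s : (0 < n)%N -> uniq (map (modn^~ n) s) ->
  uniq (map (modn^~ n) [seq (i + e)%N | e <- s]).
Proof.
move=> hn us; rewrite -map_comp.
rewrite (eq_map (g := (fun x => (i + x) %% n)%N \o (modn^~ n))); last first.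
  by move=> x /=; rewrite modnDmr.
rewrite map_comp map_inj_in_uniq // => x y /mapP [x' _ ->] /mapP [y' _ ->] /eqP.
rewrite eqn_modDl !modn_mod => /eqP.
by [].
Qed.

Lemma mod_cancel n d a b : coprime d n -> (a < n)%N -> (b < n)%N ->
  (a * d == b * d %[mod n])%N -> a = b.
Proof.
move=> cop.
wlog le_ba : a b / (b <= a)%N.
  move=> H Ha Hb E; case: (leqP b a) => hba; first exact: H.
  by apply/esym; apply: H => //; [exact: ltnW | rewrite eq_sym].
move=> Ha Hb; rewrite eqn_mod_dvd; last by rewrite leq_mul2r le_ba orbT.
rewrite -mulnBl Gauss_dvdl; last by rewrite coprime_sym.
move=> Hdv; case: (posnP (a - b)) => [H0|Hpos]; first lia.
have := dvdn_leq Hpos Hdv; lia.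
Qed.

Lemma uniq_mulmod n d s : (0 < n)%N -> coprime d n -> uniq (map (modn^~ n) s) ->
  uniq (map (modn^~ n) [seq (e * d)%N | e <- s]).
Proof.
move=> hn cop us; rewrite -map_comp.
rewrite (eq_map (g := (fun x => (x * d) %% n)%N \o (modn^~ n))); last first.
  by move=> x /=; rewrite modnMml.
rewrite map_comp map_inj_in_uniq // => x y /mapP [x' _ ->] /mapP [y' _ ->] /eqP.
move/mod_cancel => H; apply: H cop _ _; exact: ltn_pmod.
Qed.

Lemma Dn_dvd_pow n k : Dn n %| 'X^(n * k) - 1.
Proof. by rewrite exprM /Dn (subrX1 ('X^n)) dvdp_mulIl. Qed.

Lemma comp1 (q : P2) : 1 \Po q = 1.
Proof. by rewrite -polyC1 comp_polyC. Qed.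

Lemma sigma_C1 n d p q : (d * d + 1 = n.*2)%N ->
  inC1 n bic_a (bic_b d) (p, q) ->
  inC1 n bic_a (bic_b d) ('X * (q \Po 'X^d), p \Po 'X^d).
Proof.
move=> Hdn; rewrite /inC1 /= => /red_eq0 H; apply/red_eq0.
have H1 := dvdp_comp_poly ('X^d) H.
have H2 : Dn n %| Dn n \Po 'X^d.
  by rewrite /Dn comp_polyB comp_Xn_poly -exprM comp1 mulnC Dn_dvd_pow.
have H3 := dvdp_trans H2 H1.
rewrite /bic_a /bic_b !(comp_polyD, comp_polyM, comp1, comp_Xn_poly, comp_polyX) in H3.
rewrite -exprM in H3.
set p' := p \Po 'X^d in H3 *; set q' := q \Po 'X^d in H3 *.
have E : 'X * q' * bic_b d + p' * bic_a =
   'X * (p' * (1 + 'X^(d * d)) + q' * (1 + 'X^d)) + p' * (1 - 'X^(n * 2)).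
  rewrite /bic_b /bic_a muln2 -Hdn addn1 exprS; ring.
rewrite E; apply: dvdp_add; first exact: dvdp_mull.
by apply: dvdp_mull; rewrite -opprB dvdpNr Dn_dvd_pow.
Qed.

Lemma F2_case (p1 q1 c : 'F_2) : (p1 != 0 \/ q1 != 0) ->
  ((c + 1) * p1 + c * q1 != 0) \/ (c * p1 + (c + 1) * q1 != 0).
Proof.
case: (F2_01 p1) => ->; case: (F2_01 q1) => ->; case: (F2_01 c) => ->;
rewrite ?eqxx; try (by case); move=> _;
rewrite ?F2_11 ?mul0r ?mulr0 ?mul1r ?mulr1 ?add0r ?addr0 ?F2_11 ?oner_eq0; auto.
Qed.

Section Spec.
Variables m d n : nat.
Hypothesis hm : (0 < m)%N.
Hypothesis hd : d = m.*2.+1.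
Hypothesis hn : n = (m * d + m).+1.

Lemma n_gt0 : (0 < n)%N. Proof. by rewrite hn. Qed.
Lemma n_odd : odd n.
Proof.
have -> : n = (m * m + m).*2.+1 by rewrite hn hd; lia.
by rewrite /= odd_double.
Qed.
Lemma d_lt_n : (d < n)%N. Proof. rewrite hn hd; nia. Qed.
Lemma dd_n : (d * d + 1 = n.*2)%N. Proof. rewrite hn hd; lia. Qed.
Lemma cop_dn : coprime d n.
Proof.
rewrite /coprime; apply/eqP; apply/eqP; rewrite -dvdn1.
have H1 : (gcdn d n %| d * d)%N by apply: dvdn_mulr; apply: dvdn_gcdl.
have H2 : (gcdn d n %| d * d + 1)%N by rewrite dd_n -muln2; apply: dvdn_mulr; apply: dvdn_gcdr.
by rewrite -(dvdn_addr 1 H1).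
Qed.

Definition uL := [seq (j * d)%N | j <- iota 0 m].
Definition vL := [seq (m * d + j)%N | j <- iota 0 m.+1].
Definition PL := iota 0 d.
Definition AL := [seq (1 + e * d)%N | e <- vL].
Definition BL := [seq (e * d)%N | e <- uL].
Definition QL := [seq (1 + j * d)%N | j <- iota 0 m.+1] ++ [seq (1 + m + j * d)%N | j <- iota 0 m].
Definition JL := iota 0 n.

Lemma uE : bic_u d = msum uL.
Proof.
rewrite /bic_u (_ : ((d - 1) %/ 2 = m)%N); last by rewrite hd; lia.
by rewrite (sum_ord_msum m (fun i => i * d)%N).
Qed.

Lemma vE : bic_v d = msum vL.
Proof.
rewrite /bic_v (_ : ((d + 1) %/ 2 = m.+1)%N); last by rewrite hd; lia.
rewrite (sum_ord_msum m.+1 (fun i => bic_n d - m.+1 + i)%N) /vL; congr msum; apply: eq_map => j.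
rewrite /bic_n (_ : ((d * d + 1) %/ 2 = n)%N); last by rewrite dd_n; lia.
rewrite hn; lia.
Qed.

Lemma PdE : Pd d = msum PL.
Proof. by have := sum_ord_msum d id; rewrite map_id => <-. Qed.

Lemma AE : 'X * (bic_v d \Po 'X^d) = msum AL.
Proof.
have -> : ('X : P2) = 'X^1 by rewrite expr1.
by rewrite vE msum_comp msum_shift /AL -map_comp.
Qed.

Lemma BE : bic_u d \Po 'X^d = msum BL.
Proof. by rewrite uE msum_comp. Qed.

Lemma JE : Jn n = msum JL.
Proof. by have := sum_ord_msum n id; rewrite map_id => <-. Qed.

Lemma dvd2 (D E k C : P2) : E = D * k + (1 + 1) * C -> D %| E.
Proof. by move=> ->; rewrite two0 mul0r addr0 dvdp_mulIl. Qed.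

Definition Sg k : P2 := \sum_(i < k) ('X^d) ^+ i.
Definition Gg k : P2 := \sum_(i < k) 'X ^+ i.

Lemma u_geom : bic_u d = Sg m.
Proof.
rewrite /Sg uE /uL -(sum_ord_msum m (fun i => i * d)%N).
by apply: eq_bigr => i _; rewrite mulnC exprM.
Qed.

Lemma v_geom : bic_v d = 'X^(m * d) * Gg m.+1.
Proof.
rewrite vE /vL /Gg (_ : [seq (m * d + j)%N | j <- iota 0 m.+1] =
   [seq (m * d + j)%N | j <- map id (iota 0 m.+1)]); last by rewrite map_id.
by rewrite -msum_shift -sum_ord_msum.
Qed.

Lemma Pd_geom : Pd d = Gg d.
Proof. by []. Qed.

Lemma Xd : ('X^d : P2) = 'X^m * 'X^m * 'X.
Proof. by rewrite hd -addnn -exprD -exprSr. Qed.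

Lemma Xn : ('X^n : P2) = 'X^(m * d) * 'X^m * 'X.
Proof. by rewrite hn -exprD -exprSr. Qed.

Lemma C1_w1 : inC1 n bic_a (bic_b d) (bic_w1 d).
Proof.
rewrite /inC1 /bic_w1 /=; apply/red_eq0.
rewrite u_geom v_geom /bic_b /bic_a.
have -> : Sg m * (1 + 'X^d) + 'X^(m * d) * Gg m.+1 * (1 + 'X) =
   (1 + 'X^d) * Sg m + 'X^(m * d) * ((1 + 'X) * Gg m.+1) by ring.
rewrite /Sg geomF2 /Gg geomF2 -exprM exprSr mulnC.
apply: (@dvd2 _ _ 1 (1 + 'X^(m * d))); rewrite /Dn Xn; ring.
Qed.

Lemma C1_w2 : inC1 n bic_a (bic_b d) (bic_w2 d).
Proof. by apply: sigma_C1; [exact: dd_n | exact: C1_w1]. Qed.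

Lemma QE : msum QL = 'X * Sg m.+1 + 'X^(m.+1) * Sg m.
Proof.
rewrite /QL msum_cat -(sum_ord_msum m.+1 (fun j => 1 + j * d)%N).
rewrite -(sum_ord_msum m (fun j => 1 + m + j * d)%N) /Sg !mulr_sumr.
congr (_ + _); apply: eq_bigr => i _; rewrite -exprM mulnC exprD ?expr1 //.
Qed.

Lemma PdQ : Dn n %| Pd d * msum QL - 1.
Proof.
rewrite -(dvdp_mul2l _ _ X1_neq0).
have -> : (1 + 'X) * (Pd d * msum QL - 1) = ((1 + 'X) * Pd d) * msum QL - (1 + 'X) by ring.
rewrite /Pd geomF2 QE.
have -> : (1 + 'X^d) * ('X * Sg m.+1 + 'X^(m.+1) * Sg m) =
  'X * ((1 + 'X^d) * Sg m.+1) + 'X^(m.+1) * ((1 + 'X^d) * Sg m) by ring.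
rewrite /Sg !geomF2 -!exprM mulnS exprD Xd (exprSr 'X m) (mulnC d m).
apply: (@dvdp_trans _ (Dn n * ((1 + 'X) * Gg m.+1))).
  by rewrite mulrCA mulrA dvdp_mulIl.
rewrite /Gg geomF2 exprSr.
apply: (@dvd2 _ _ 1 ('X^m * 'X)); rewrite /Dn Xn; ring.
Qed.

Lemma map_mod_small s : all (fun e => e < n)%N s -> map (modn^~ n) s = s.
Proof.
elim: s => //= e s IH /andP [He Hs]; by rewrite modn_small // IH.
Qed.

Lemma uniq_small s : all (fun e => e < n)%N s -> uniq s -> uniq (map (modn^~ n) s).
Proof. by move=> H; rewrite map_mod_small. Qed.

Lemma uniq_uL : uniq (map (modn^~ n) uL).
Proof.
apply: uniq_small.
  apply/allP => x /mapP [j]; rewrite mem_iota add0n => Hj ->.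
  rewrite hn; apply: (@leq_ltn_trans (m * d)); last lia.
  by rewrite leq_mul2r ltnW ?orbT.
rewrite map_inj_uniq ?iota_uniq // => x y /eqP; rewrite eqn_mul2r hd /= => /eqP.
done.
Qed.

Lemma uniq_vL : uniq (map (modn^~ n) vL).
Proof.
apply: uniq_small.
  apply/allP => x /mapP [j]; rewrite mem_iota add0n => Hj ->; rewrite hn; lia.
by rewrite map_inj_uniq ?iota_uniq // => x y /addnI.
Qed.

Lemma uniq_PL : uniq (map (modn^~ n) PL).
Proof.
apply: uniq_small; last exact: iota_uniq.
apply/allP => x; rewrite mem_iota add0n => Hx; apply: ltn_trans Hx d_lt_n.
Qed.

Lemma uniq_JL : uniq (map (modn^~ n) JL).
Proof.
apply: uniq_small; last exact: iota_uniq.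
by apply/allP => x; rewrite mem_iota add0n.
Qed.

Lemma uniq_AL : uniq (map (modn^~ n) AL).
Proof.
rewrite /AL (_ : [seq (1 + e * d)%N | e <- vL] = [seq (1 + e)%N | e <- [seq (e * d)%N | e <- vL]]).
  apply: uniq_shift n_gt0 _; apply: uniq_mulmod n_gt0 cop_dn uniq_vL.
by rewrite -map_comp.
Qed.

Lemma uniq_BL : uniq (map (modn^~ n) BL).
Proof. exact: uniq_mulmod n_gt0 cop_dn uniq_uL. Qed.

Lemma uniq_QL : uniq (map (modn^~ n) QL).
Proof.
apply: uniq_small.
  apply/allP => x; rewrite mem_cat => /orP [] /mapP [j];
  rewrite mem_iota add0n => Hj ->; rewrite hn hd; nia.
rewrite cat_uniq; apply/and3P; split.
- rewrite map_inj_uniq ?iota_uniq // => x y /addnI /eqP.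
  by rewrite eqn_mul2r hd /= => /eqP.
- apply/hasPn => x /mapP [j]; rewrite mem_iota add0n => Hj -> {x}.
  apply/mapP => [[k]]; rewrite mem_iota add0n => Hk.
  rewrite -addnA => /addnI; rewrite hd -muln2 => E.
  case: (leqP k j) => Hjk; nia.
- rewrite map_inj_uniq ?iota_uniq // => x y /addnI /eqP.
  by rewrite eqn_mul2r hd /= => /eqP.
Qed.

Lemma wt_shift i s : uniq (map (modn^~ n) s) -> wtR n ('X^i * msum s) = size s.
Proof.
move=> us; rewrite msum_shift wtR_msum ?size_map //; first exact: n_gt0.
exact: uniq_shift n_gt0 us.
Qed.

Lemma wt_u : wtR n (bic_u d) = m.
Proof. by rewrite uE wtR_msum ?n_gt0 ?uniq_uL // size_map size_iota. Qed.
Lemma wt_v : wtR n (bic_v d) = m.+1.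
Proof. by rewrite vE wtR_msum ?n_gt0 ?uniq_vL // size_map size_iota. Qed.
Lemma wt_A : wtR n ('X * (bic_v d \Po 'X^d)) = m.+1.
Proof. by rewrite AE wtR_msum ?n_gt0 ?uniq_AL // !size_map size_iota. Qed.
Lemma wt_B : wtR n (bic_u d \Po 'X^d) = m.
Proof. by rewrite BE wtR_msum ?n_gt0 ?uniq_BL // !size_map size_iota. Qed.
Lemma wt_J : wtR n (Jn n) = n.
Proof. by rewrite JE wtR_msum ?n_gt0 ?uniq_JL // size_iota. Qed.

Lemma u1 : (bic_u d).[1] = m%:R.
Proof. by rewrite uE horner_msum size_map size_iota. Qed.
Lemma v1 : (bic_v d).[1] = m.+1%:R.
Proof. by rewrite vE horner_msum size_map size_iota. Qed.
Lemma A1 : ('X * (bic_v d \Po 'X^d)).[1] = m.+1%:R.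
Proof. by rewrite AE horner_msum !size_map size_iota. Qed.
Lemma B1 : (bic_u d \Po 'X^d).[1] = m%:R.
Proof. by rewrite BE horner_msum !size_map size_iota. Qed.

Lemma bound_h (h x y p q : P2) kx ky :
  wtR n x = kx -> wtR n y = ky ->
  Dn n %| h - h.[1]%:P * Jn n -> h.[1] != 0 -> h = x * p + y * q ->
  (n <= kx * wtR n p + ky * wtR n q)%N.
Proof.
move=> Hx Hy Hd H1 Eh.
rewrite (F2_ne0 H1) polyC1 mul1r in Hd.
rewrite -{1}wt_J -(wtR_cong Hd) Eh -Hx -Hy.
apply: leq_trans (wtR_add _ _ n_gt0) _.
by apply: leq_add; apply: wtR_mul n_gt0.
Qed.

Lemma dist p q : inC1 n bic_a (bic_b d) (p, q) -> (p.[1] != 0 \/ q.[1] != 0) ->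
  (d <= wtR n p + wtR n q)%N.
Proof.
move=> Hw Hpq.
have Ew : Dn n %| p * bic_b d + q * bic_a by apply/red_eq0; exact: Hw.
have E1 : Dn n %| bic_u d * bic_b d + bic_v d * bic_a by apply/red_eq0; exact: C1_w1.
have E2 : Dn n %| ('X * (bic_v d \Po 'X^d)) * bic_b d + (bic_u d \Po 'X^d) * bic_a.
  by apply/red_eq0; exact: C1_w2.
set u := bic_u d in E1 *; set v := bic_v d in E1 *.
set A := 'X * _ in E2 *; set B := _ \Po _ in E2 *.
have H1 : Dn n %| (1 + 'X) * (v * p + u * q).
  have -> : (1 + 'X) * (v * p + u * q) =
    p * (u * bic_b d + v * bic_a) + u * (p * bic_b d + q * bic_a) - (1 + 1) * (p * u * bic_b d).
    by rewrite /bic_a /bic_b; ring.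
  by rewrite two0 mul0r subr0; apply: dvdp_add; apply: dvdp_mull.
have H2 : Dn n %| (1 + 'X) * (B * p + A * q).
  have -> : (1 + 'X) * (B * p + A * q) =
    p * (A * bic_b d + B * bic_a) + A * (p * bic_b d + q * bic_a) - (1 + 1) * (p * A * bic_b d).
    by rewrite /bic_a /bic_b; ring.
  by rewrite two0 mul0r subr0; apply: dvdp_add; apply: dvdp_mull.
have J1 := annJ n_odd H1; have J2 := annJ n_odd H2.
have e1 : (v * p + u * q).[1] = (m%:R + 1) * p.[1] + m%:R * q.[1].
  by rewrite hornerD !hornerM /v /u v1 u1 mulrSr.
have e2 : (B * p + A * q).[1] = m%:R * p.[1] + (m%:R + 1) * q.[1].
  by rewrite hornerD (hornerM B p) (hornerM A q) /B /A B1 A1 mulrSr.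
have hd' : d = m.*2.+1 := hd.
case: (F2_case (m%:R) Hpq); rewrite -?e1 -?e2 => Hh.
  have := bound_h wt_v wt_u J1 Hh (erefl _); rewrite hn hd'; nia.
have := bound_h wt_B wt_A J2 Hh (erefl _); rewrite hn hd'; nia.
Qed.

Lemma F2_xx (x : 'F_2) : x + x = 0.
Proof. by case: (F2_01 x) => ->; rewrite ?addr0 ?F2_11. Qed.

Lemma F2_eq (x y : 'F_2) : x + y = 0 -> x = y.
Proof. by move=> H; rewrite -[y]add0r -H -addrA F2_xx addr0. Qed.

Lemma C1_shift i w : inC1 n bic_a (bic_b d) w -> inC1 n bic_a (bic_b d) (vshift i w).
Proof.
rewrite /inC1 /vshift /= => /red_eq0 H; apply/red_eq0.
rewrite -!mulrA -mulrDr; exact: dvdp_mull.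
Qed.

Lemma C1_add w w' : inC1 n bic_a (bic_b d) w -> inC1 n bic_a (bic_b d) w' ->
  inC1 n bic_a (bic_b d) (vadd w w').
Proof.
rewrite /inC1 /vadd /= => /red_eq0 H /red_eq0 H'; apply/red_eq0.
have -> : (w.1 + w'.1) * bic_b d + (w.2 + w'.2) * bic_a =
  (w.1 * bic_b d + w.2 * bic_a) + (w'.1 * bic_b d + w'.2 * bic_a) by ring.
exact: dvdp_add.
Qed.

Lemma shift1 i (p : P2) : ('X^i * p).[1] = p.[1].
Proof. by rewrite hornerM hornerXn expr1n mul1r. Qed.

Lemma same_par w w' : inC1 n bic_a (bic_b d) w -> inC1 n bic_a (bic_b d) w' ->
  w.1.[1] = w'.1.[1] -> w.2.[1] = w'.2.[1] -> same_logical n bic_a (bic_b d) w w'.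
Proof.
move=> H H' e1 e2; split => //; split => //.
apply: triv n_odd (C1_add H H') _ _; by rewrite /vadd /= hornerD ?e1 ?e2 F2_xx.
Qed.

Lemma same_shift i w : inC1 n bic_a (bic_b d) w ->
  same_logical n bic_a (bic_b d) (vshift i w) w.
Proof. by move=> H; apply: same_par (C1_shift i H) H _ _; rewrite /vshift /= shift1. Qed.

Lemma same_par_inv w w' : same_logical n bic_a (bic_b d) w w' ->
  w'.1.[1] = w.1.[1] /\ w'.2.[1] = w.2.[1].
Proof.
move=> [_ [_ /inC2_par]]; rewrite /vadd /= !hornerD => [[H1 H2]].
by split; apply/esym/F2_eq.
Qed.

Lemma min_gen w : wt n w = d -> inC1 n bic_a (bic_b d) w ->
  (w.1.[1] != 0 \/ w.2.[1] != 0) -> min_weight_logical n bic_a (bic_b d) w.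
Proof.
move=> Hwt Hw Hp w' Hs; rewrite Hwt.
have [e1 e2] := same_par_inv Hs.
case: Hs => _ [H1 _]; case: w' H1 e1 e2 => p q H1 /= e1 e2.
by apply: dist H1 _; rewrite e1 e2.
Qed.

Lemma odd_wt p : p.[1] != 0 -> odd (wtR n p).
Proof. by rewrite -(wtR_par _ n_gt0) F2nat_neq0. Qed.

Lemma min_gen2 w : wt n w = d.+1 -> inC1 n bic_a (bic_b d) w ->
  w.1.[1] != 0 -> w.2.[1] != 0 -> min_weight_logical n bic_a (bic_b d) w.
Proof.
move=> Hwt Hw Hp1 Hp2 w' Hs; rewrite Hwt.
have [e1 e2] := same_par_inv Hs.
case: Hs => _ [H1 _]; case: w' H1 e1 e2 => p q H1 /= e1 e2.
have Hd : (d <= wtR n p + wtR n q)%N by apply: dist H1 _; left; rewrite e1.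
have op : odd (wtR n p) by apply: odd_wt; rewrite e1.
have oq : odd (wtR n q) by apply: odd_wt; rewrite e2.
rewrite /wt /=.
have Ex := odd_double_half (wtR n p); have Ey := odd_double_half (wtR n q).
rewrite op in Ex; rewrite oq in Ey.
have hd' := hd; lia.
Qed.

End Spec.

Lemma bPd d : bic_b d = (1 + 'X) * Pd d.
Proof. by rewrite /bic_b /Pd geomF2. Qed.

Lemma one_msum : (1 : P2) = msum [:: 0%N].
Proof. by rewrite /msum big_seq1 expr0. Qed.

Lemma F2_nz (x : 'F_2) : x != 0 \/ x + 1 != 0.
Proof. by case: (F2_01 x) => ->; [right; rewrite add0r | left]; rewrite oner_eq0. Qed.

Unset Implicit Arguments.
Set Strict Implicit.
Theorem theorem5 (d : nat) (hd3 : (3 <= d)%N) (hodd : odd d) :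
  let n := bic_n d in
  let a := bic_a in
  let b := bic_b d in
  let w1 := bic_w1 d in
  let w2 := bic_w2 d in
  let wIX := (1 : {poly 'F_2}, Pd d) in
  (* w1, w2 are non-trivial logicals, and w1 + w2 is non-trivial *)
  (inC1 n a b w1 /\ ~ inC2 n a b w1) /\
  (inC1 n a b w2 /\ ~ inC2 n a b w2) /\
  ~ inC2 n a b (vadd w1 w2) /\
  (* P_d is invertible modulo x^n - 1 *)
  (exists q : {poly 'F_2}, red n (Pd d * q) = 1) /\
  (forall Pinv : {poly 'F_2}, red n (Pd d * Pinv) = 1 ->
     let wIX' := (Pinv, 1 : {poly 'F_2}) in
     (* IX = XI * XX is implemented by (1, P_d) and by (P_d^{-1}, 1) *)
     same_logical n a b wIX (vadd w1 w2) /\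
     same_logical n a b wIX' (vadd w1 w2) /\
     (* every cyclic shift implements the same logical operator *)
     (forall i : nat,
        same_logical n a b (vshift i w1) w1 /\
        same_logical n a b (vshift i w2) w2 /\
        same_logical n a b (vshift i wIX) wIX /\
        same_logical n a b (vshift i wIX') wIX') /\
     (* weights and minimality, also for all cyclic shifts *)
     (forall i : nat,
        wt n (vshift i w1) = d /\ wt n (vshift i w2) = d /\
        wt n (vshift i wIX) = d.+1 /\ wt n (vshift i wIX') = d.+1 /\
        min_weight_logical n a b (vshift i w1) /\
        min_weight_logical n a b (vshift i w2) /\
        min_weight_logical n a b (vshift i wIX) /\
        min_weight_logical n a b (vshift i wIX'))).
Proof.
move=> n a b w1 w2 wIX.
pose m := d./2.
have hd : d = m.*2.+1.
  by have := odd_double_half d; rewrite hodd /m => E; rewrite -{1}E.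
clearbody m.
have hm : (0 < m)%N by move: hd3; rewrite hd; lia.
have hn : n = (m * d + m).+1 by rewrite /n /bic_n {1 2}hd; lia.
have hn0 : (0 < n)%N by rewrite hn.
have pu := u1 hm hd hn; have pv := v1 hm hd hn.
have pA := A1 hm hd hn; have pB := B1 hm hd hn.
have c1 : inC1 n a b w1 := C1_w1 hm hd hn.
have c2 : inC1 n a b w2 := C1_w2 hm hd hn.
have Pd1 : (Pd d).[1] = 1.
  by rewrite PdE horner_msum size_iota natF2 hodd.
have s12 : (vadd w1 w2).1.[1] = 1.
  by rewrite /vadd /w1 /w2 /bic_w1 /bic_w2 /= hornerD pu pA mulrSr addrA F2_xx add0r.
have s12' : (vadd w1 w2).2.[1] = 1.
  by rewrite /vadd /w1 /w2 /bic_w1 /bic_w2 /= hornerD pv pB mulrSr addrAC F2_xx add0r.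
split; [split => // /inC2_par [] | split; [split => // /inC2_par [] | split]].
- rewrite /w1 /bic_w1 /= pu pv mulrSr => ->; rewrite add0r => /eqP; by rewrite oner_eq0.
- rewrite /w2 /bic_w2 /= pA pB mulrSr => + Hm; rewrite Hm add0r => /eqP; by rewrite oner_eq0.
- by move/inC2_par; rewrite s12 => [[/eqP]]; rewrite oner_eq0.
split.
  exists (msum (QL m d)); rewrite -(@red_small n 1) //; last by rewrite size_poly1.
  by apply/red_eq; exact: PdQ hd hn.
move=> Pinv HP wIX'.
have HP' : Dn n %| Pd d * Pinv - 1.
  by apply/red_eq; rewrite HP red_small // size_poly1.
have HQ : Dn n %| Pinv - msum (QL m d).
  have -> : Pinv - msum (QL m d) =
    msum (QL m d) * (Pd d * Pinv - 1) - Pinv * (Pd d * msum (QL m d) - 1) by ring.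
  by apply: dvdp_sub; apply: dvdp_mull => //; exact: PdQ hd hn.
have Pinv1 : Pinv.[1] = 1.
  by have := horner_cong HP'; rewrite hornerM Pd1 mul1r hornerC.
have cIX : inC1 n a b wIX.
  rewrite /inC1 /wIX /= /b bPd mul1r /a mulrC addF2; apply/red_eq0; exact: dvdp0.
have cIX' : inC1 n a b wIX'.
  rewrite /inC1 /wIX' /= /b bPd mul1r /a; apply/red_eq0.
  have -> : Pinv * ((1 + 'X) * Pd d) + (1 + 'X) =
     (1 + 'X) * (Pd d * Pinv - 1) + (1 + 1) * (1 + 'X) by ring.
  by rewrite two0 mul0r addr0; apply: dvdp_mull.
have W1 : forall i, wt n (vshift i w1) = d.
  move=> i; rewrite /wt /vshift /w1 /bic_w1 /= (uE hm hd hn) (vE hm hd hn).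
  rewrite !(wt_shift hn) ?(uniq_uL hm hd hn) ?(uniq_vL hm hd hn) //.
  by rewrite !size_map !size_iota hd; lia.
have W2 : forall i, wt n (vshift i w2) = d.
  move=> i; rewrite /wt /vshift /w2 /bic_w2 /= (AE hm hd hn) (BE hm hd hn).
  rewrite !(wt_shift hn) ?(uniq_AL hm hd hn) ?(uniq_BL hm hd hn) //.
  by rewrite !size_map !size_iota hd; lia.
have W3 : forall i, wt n (vshift i wIX) = d.+1.
  move=> i; rewrite /wt /vshift /wIX /= PdE one_msum.
  by rewrite !(wt_shift hn) ?(uniq_PL hm hd hn) // size_iota add1n.
have W4 : forall i, wt n (vshift i wIX') = d.+1.
  move=> i; rewrite /wt /vshift /wIX' /=.
  rewrite (@wtR_cong n _ ('X^i * msum (QL m d))); last first.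
    by rewrite -mulrBr; apply: dvdp_mull.
  rewrite one_msum !(wt_shift hn) ?(uniq_QL hm hd hn) //.
  by rewrite size_cat !size_map !size_iota /= hd; lia.
split.
  by apply: (same_par hm hd hn) => //; [exact: C1_add | rewrite s12 hornerC | rewrite s12' Pd1].
split.
  by apply: (same_par hm hd hn) => //; [exact: C1_add | rewrite s12 Pinv1 | rewrite s12' hornerC].
split.
  by move=> i; split; [|split; [|split]]; apply: (same_shift hm hd hn).
move=> i; split; first exact: W1.
split; first exact: W2.
split; first exact: W3.
split; first exact: W4.
split.
  apply: (min_gen hm hd hn) (W1 i) (C1_shift i c1) _.
  by rewrite /vshift /w1 /bic_w1 /= !shift1 pu pv mulrSr; exact: F2_nz.
split.
  apply: (min_gen hm hd hn) (W2 i) (C1_shift i c2) _.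
  by rewrite /vshift /w2 /bic_w2 /= !shift1 pA pB mulrSr or_comm; exact: F2_nz.
split.
  apply: (min_gen2 hm hd hn) (W3 i) (C1_shift i cIX) _ _;
  by rewrite /vshift /wIX /= !shift1 ?Pd1 ?hornerC oner_eq0.
apply: (min_gen2 hm hd hn) (W4 i) (C1_shift i cIX') _ _;
by rewrite /vshift /wIX' /= !shift1 ?Pinv1 ?hornerC oner_eq0.
Qed.
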